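(* Let $(G(f,g),h)$ and $(G(\bar f,\bar g),\bar h)$ be two $U(1)$-invariant gradient steady Ricci solitons on $E$, with $h=h(s)$ and $\bar h=\bar h(s)$, whose metrics extend smoothly over the zero section. Suppose $g(0)=\bar g(0)$, and suppose the two constants agree: $\mathcal C=\bar{\mathcal C}>0$. Then $(G(f,g),h_s)=(G(\bar f,\bar g),\bar h_s)$.
   Context: $(B^d,\check g,\check J,\check\omega)$ is a Fano Kähler–Einstein manifold of real dimension $d$ with $\mathrm{Rc}(\check g)=(d+2)\check g$. $E\to B$ is a complex line bundle with $c_1(E)=q\,c_1(B)$ in $H^2(B;\mathbb R)$ for some $q\in\mathbb R$, and $P\to B$ is the associated principal $U(1)$-bundle. Then $E=([0,\infty)\times P)/\!\sim$, where the circles over $\{0\}\times P$ are collapsed, and $E\setminus B_0\cong(0,\infty)\times P$, with $B_0$ the zero section. For $a,b>0$, $\hat g(a,b)$ is the metric on $P$ making $P\to(B,b^2\check g)$ a Riemannian submersion with totally geodesic fibers of length $2\pi a$ and with horizontal distribution that of the $U(1)$-connection with curvature $q(d+2)\check\omega$. With $s$ the coordinate on $(0,\infty)$, $G(f,g)=ds^2+\hat g(f(s),g(s))$ for positive functions $f,g$. A gradient steady soliton of this form satisfies $\mathrm{Rc}(G)=\nabla^2h$. Its scalar curvature satisfies $S+h_s^2\equiv\mathcal C$ for a constant $\mathcal C$; since $h_s(0)=0$, $\mathcal C$ is the maximal scalar curvature. *)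

(* Defs.v *)
From Stdlib Require Import Reals.
Open Scope R_scope.

Definition is_deriv (F F' : R -> R) : Prop :=
  forall x, derivable_pt_lim F x (F' x).

Definition smooth (F : R -> R) : Prop :=
  exists D : nat -> R -> R, D O = F /\ forall n, is_deriv (D n) (D (S n)).

(* Ricci components of G(f,g) = ds^2 + f^2 sigma^2 + g^2 (pullback of check g),
   with d = dim_R B, Rc(check g) = (d+2) check g, d sigma = Q check omega,
   Q = q (d+2).  Components are w.r.t. unit vectors: radial (ss), fibre (vv),
   horizontal (hh). f1,f2,g1,g2 are the first and second s-derivatives. *)
Definition Rc_ss (d : R) (f f1 f2 g g1 g2 : R) : R :=
  - f2 / f - d * g2 / g.
Definition Rc_vv (d q : R) (f f1 f2 g g1 g2 : R) : R :=
  - f2 / f - d * f1 * g1 / (f * g)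
  + d * (q * (d + 2)) ^ 2 * f ^ 2 / (4 * g ^ 4).
Definition Rc_hh (d q : R) (f f1 f2 g g1 g2 : R) : R :=
  - g2 / g - (d - 1) * (g1 / g) ^ 2 - f1 * g1 / (f * g)
  + (d + 2) / g ^ 2 - (q * (d + 2)) ^ 2 * f ^ 2 / (2 * g ^ 4).

Definition scal (d q : R) (f f1 f2 g g1 g2 : R) : R :=
  Rc_ss d f f1 f2 g g1 g2 + Rc_vv d q f f1 f2 g g1 g2
  + d * Rc_hh d q f f1 f2 g g1 g2.

(* (G(f,g), h) is a U(1)-invariant gradient steady Ricci soliton
   Rc(G) = Hess_G h on E = ([0,oo) x P)/~, with h = h(s), whose metric (and
   potential) extend smoothly over the zero section, and whose constant
   S + h_s^2 equals C.  The functions are given on all of R: their values for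
   s < 0 are the odd (f) / even (g, h) extensions, and smooth extension over
   the zero section means these extensions are smooth with f'(0) = 1
   (fibres are circles of length 2 pi f(s) collapsing at s = 0). *)
Definition steady_soliton (d q C : R) (f g h : R -> R) : Prop :=
  exists f1 f2 g1 g2 h1 h2 : R -> R,
    smooth f /\ smooth g /\ smooth h /\
    is_deriv f f1 /\ is_deriv f1 f2 /\
    is_deriv g g1 /\ is_deriv g1 g2 /\
    is_deriv h h1 /\ is_deriv h1 h2 /\
    (forall x, f (- x) = - f x) /\
    (forall x, g (- x) = g x) /\
    (forall x, h (- x) = h x) /\
    f1 0 = 1 /\
    (forall s, 0 < s -> 0 < f s) /\
    (forall s, 0 <= s -> 0 < g s) /\
    (* Rc = Hess h on E \ B_0 = (0,oo) x P *)
    (forall s, 0 < s ->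
       Rc_ss d (f s) (f1 s) (f2 s) (g s) (g1 s) (g2 s) = h2 s /\
       Rc_vv d q (f s) (f1 s) (f2 s) (g s) (g1 s) (g2 s)
         = h1 s * f1 s / f s /\
       Rc_hh d q (f s) (f1 s) (f2 s) (g s) (g1 s) (g2 s)
         = h1 s * g1 s / g s) /\
    (forall s, 0 < s ->
       scal d q (f s) (f1 s) (f2 s) (g s) (g1 s) (g2 s) + (h1 s) ^ 2 = C).

(* Main.v *)
Require Import Defs.
From Stdlib Require Import Reals Lra Psatz FunctionalExtensionality.
Open Scope R_scope.

Definition st := (R*R*R*R*R)%type.
Definition q1 (u:st) : R := fst (fst (fst (fst u))).
Definition q2 (u:st) : R := snd (fst (fst (fst u))).
Definition q3 (u:st) : R := snd (fst (fst u)).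
Definition q4 (u:st) : R := snd (fst u).
Definition q5 (u:st) : R := snd u.
Definition dst (u v : st) := Rabs (q1 u - q1 v) + Rabs (q2 u - q2 v) + Rabs (q3 u - q3 v)
  + Rabs (q4 u - q4 v) + Rabs (q5 u - q5 v).
Definition Dom B m (u:st) := Rabs (q1 u) <= B /\ Rabs (q2 u) <= B /\ Rabs (q3 u) <= B /\
  Rabs (q4 u) <= B /\ Rabs (q5 u) <= B /\ m <= q3 u.
Definition Lip B m (F : st -> R) := exists L, 0 <= L /\ forall u v, Dom B m u -> Dom B m v ->
  Rabs (F u - F v) <= L * dst u v.
Definition Bdd B m (F : st -> R) := exists K, forall u, Dom B m u -> Rabs (F u) <= K.

Lemma dist_ge0 u v : 0 <= dst u v.
Proof. unfold dst; pose proof (Rabs_pos (q1 u - q1 v)); pose proof (Rabs_pos (q2 u - q2 v));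
 pose proof (Rabs_pos (q3 u - q3 v)); pose proof (Rabs_pos (q4 u - q4 v));
 pose proof (Rabs_pos (q5 u - q5 v)); lra. Qed.

Ltac dq := intros; unfold dst; match goal with |- Rabs (?a - ?b) <= _ => idtac end;
 pose proof (Rabs_pos (q1 _ - q1 _)).

Lemma Lip_q1 B m : Lip B m (fun u => q1 u).
Proof. exists 1; split; [lra|]; intros u v _ _; unfold dst;
 pose proof (Rabs_pos (q2 u - q2 v)); pose proof (Rabs_pos (q3 u - q3 v));
 pose proof (Rabs_pos (q4 u - q4 v)); pose proof (Rabs_pos (q5 u - q5 v)); lra. Qed.
Lemma Lip_q2 B m : Lip B m (fun u => q2 u).
Proof. exists 1; split; [lra|]; intros u v _ _; unfold dst;
 pose proof (Rabs_pos (q1 u - q1 v)); pose proof (Rabs_pos (q3 u - q3 v));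
 pose proof (Rabs_pos (q4 u - q4 v)); pose proof (Rabs_pos (q5 u - q5 v)); lra. Qed.
Lemma Lip_q3 B m : Lip B m (fun u => q3 u).
Proof. exists 1; split; [lra|]; intros u v _ _; unfold dst;
 pose proof (Rabs_pos (q2 u - q2 v)); pose proof (Rabs_pos (q1 u - q1 v));
 pose proof (Rabs_pos (q4 u - q4 v)); pose proof (Rabs_pos (q5 u - q5 v)); lra. Qed.
Lemma Lip_q4 B m : Lip B m (fun u => q4 u).
Proof. exists 1; split; [lra|]; intros u v _ _; unfold dst;
 pose proof (Rabs_pos (q2 u - q2 v)); pose proof (Rabs_pos (q3 u - q3 v));
 pose proof (Rabs_pos (q1 u - q1 v)); pose proof (Rabs_pos (q5 u - q5 v)); lra. Qed.
Lemma Lip_q5 B m : Lip B m (fun u => q5 u).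
Proof. exists 1; split; [lra|]; intros u v _ _; unfold dst;
 pose proof (Rabs_pos (q2 u - q2 v)); pose proof (Rabs_pos (q3 u - q3 v));
 pose proof (Rabs_pos (q4 u - q4 v)); pose proof (Rabs_pos (q1 u - q1 v)); lra. Qed.

Lemma Bdd_q1 B m : Bdd B m (fun u => q1 u). Proof. exists B; intros u H; apply H. Qed.
Lemma Bdd_q2 B m : Bdd B m (fun u => q2 u). Proof. exists B; intros u H; apply H. Qed.
Lemma Bdd_q3 B m : Bdd B m (fun u => q3 u). Proof. exists B; intros u H; apply H. Qed.
Lemma Bdd_q4 B m : Bdd B m (fun u => q4 u). Proof. exists B; intros u H; apply H. Qed.
Lemma Bdd_q5 B m : Bdd B m (fun u => q5 u). Proof. exists B; intros u H; apply H. Qed.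

Lemma Lip_const B m c : Lip B m (fun _ => c).
Proof. exists 0; split; [lra|]; intros u v _ _; rewrite Rminus_diag, Rabs_R0;
 pose proof (dist_ge0 u v); lra. Qed.
Lemma Bdd_const B m c : Bdd B m (fun _ => c).
Proof. exists (Rabs c); intros; lra. Qed.

Lemma Lip_plus B m F G : Lip B m F -> Lip B m G -> Lip B m (fun u => F u + G u).
Proof. intros [L1 [H1 F1]] [L2 [H2 G1]]; exists (L1+L2); split; [lra|]; intros u v Hu Hv.
 specialize (F1 u v Hu Hv); specialize (G1 u v Hu Hv).
 replace (F u + G u - (F v + G v)) with ((F u - F v) + (G u - G v)) by ring.
 eapply Rle_trans; [apply Rabs_triang|]; lra. Qed.
Lemma Lip_minus B m F G : Lip B m F -> Lip B m G -> Lip B m (fun u => F u - G u).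
Proof. intros [L1 [H1 F1]] [L2 [H2 G1]]; exists (L1+L2); split; [lra|]; intros u v Hu Hv.
 specialize (F1 u v Hu Hv); specialize (G1 u v Hu Hv).
 replace (F u - G u - (F v - G v)) with ((F u - F v) + - (G u - G v)) by ring.
 eapply Rle_trans; [apply Rabs_triang|]; rewrite Rabs_Ropp; lra. Qed.
Lemma Lip_opp B m F : Lip B m F -> Lip B m (fun u => - F u).
Proof. intros [L1 [H1 F1]]; exists L1; split; [lra|]; intros u v Hu Hv.
 specialize (F1 u v Hu Hv).
 replace (- F u - - F v) with (- (F u - F v)) by ring. rewrite Rabs_Ropp; lra. Qed.
Lemma Lip_mult B m F G : Bdd B m F -> Bdd B m G -> Lip B m F -> Lip B m G -> Lip B m (fun u => F u * G u).
Proof. intros [K1 B1] [K2 B2] [L1 [H1 F1]] [L2 [H2 G1]].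
 exists (Rabs K1 * L2 + Rabs K2 * L1); split.
 { pose proof (Rabs_pos K1); pose proof (Rabs_pos K2); nra. }
 intros u v Hu Hv.
 specialize (F1 u v Hu Hv); specialize (G1 u v Hu Hv).
 pose proof (B1 u Hu); pose proof (B2 v Hv).
 replace (F u * G u - F v * G v) with (F u * (G u - G v) + G v * (F u - F v)) by ring.
 eapply Rle_trans; [apply Rabs_triang|]. rewrite !Rabs_mult.
 pose proof (dist_ge0 u v).
 pose proof (Rabs_pos (F u)); pose proof (Rabs_pos (G v)); pose proof (Rabs_pos (G u - G v));
 pose proof (Rabs_pos (F u - F v)); pose proof (Rle_abs K1); pose proof (Rle_abs K2).
 assert (Rabs (F u) * Rabs (G u - G v) <= Rabs K1 * (L2 * dst u v)).
 { apply Rmult_le_compat; lra. }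
 assert (Rabs (G v) * Rabs (F u - F v) <= Rabs K2 * (L1 * dst u v)).
 { apply Rmult_le_compat; lra. }
 nra. Qed.
Lemma Lip_inv B m F : (exists c, 0 < c /\ forall u, Dom B m u -> c <= F u) -> Lip B m F -> Lip B m (fun u => / F u).
Proof. intros [c [Hc Hl]] [L1 [H1 F1]].
 exists (L1 / (c*c)); split. { apply Rmult_le_pos; [lra|]. apply Rlt_le, Rinv_0_lt_compat; nra. }
 intros u v Hu Hv. specialize (F1 u v Hu Hv). pose proof (Hl u Hu); pose proof (Hl v Hv).
 replace (/ F u - / F v) with ((F v - F u) / (F u * F v)) by (field; lra).
 unfold Rdiv. rewrite Rabs_mult, Rabs_inv, Rabs_mult, (Rabs_pos_eq (F u)), (Rabs_pos_eq (F v)) by lra.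
 rewrite <- Rabs_Ropp. replace (- (F v - F u)) with (F u - F v) by ring.
 pose proof (Rabs_pos (F u - F v)). pose proof (dist_ge0 u v).
 assert (/ (F u * F v) <= / (c * c)). { apply Rinv_le_contravar; nra. }
 assert (0 < / (F u * F v)) by (apply Rinv_0_lt_compat; nra).
 replace (L1 * / (c*c) * dst u v) with ((L1 * dst u v) * / (c*c)) by ring.
 apply Rmult_le_compat; lra. Qed.

Lemma Bdd_plus B m F G : Bdd B m F -> Bdd B m G -> Bdd B m (fun u => F u + G u).
Proof. intros [K1 H1] [K2 H2]; exists (K1+K2); intros u Hu.
 eapply Rle_trans; [apply Rabs_triang|]. specialize (H1 u Hu); specialize (H2 u Hu); lra. Qed.
Lemma Bdd_minus B m F G : Bdd B m F -> Bdd B m G -> Bdd B m (fun u => F u - G u).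
Proof. intros [K1 H1] [K2 H2]; exists (K1+K2); intros u Hu.
 eapply Rle_trans; [apply Rabs_triang|]. rewrite Rabs_Ropp. specialize (H1 u Hu); specialize (H2 u Hu); lra. Qed.
Lemma Bdd_opp B m F : Bdd B m F -> Bdd B m (fun u => - F u).
Proof. intros [K1 H1]; exists K1; intros u Hu; rewrite Rabs_Ropp; auto. Qed.
Lemma Bdd_mult B m F G : Bdd B m F -> Bdd B m G -> Bdd B m (fun u => F u * G u).
Proof. intros [K1 H1] [K2 H2]; exists (K1*K2); intros u Hu. rewrite Rabs_mult.
 specialize (H1 u Hu); specialize (H2 u Hu). apply Rmult_le_compat; auto using Rabs_pos. Qed.
Lemma Bdd_inv B m F : (exists c, 0 < c /\ forall u, Dom B m u -> c <= F u) -> Bdd B m (fun u => / F u).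
Proof. intros [c [Hc Hl]]; exists (/c); intros u Hu. specialize (Hl u Hu).
 rewrite Rabs_inv, Rabs_pos_eq by lra. apply Rinv_le_contravar; lra. Qed.
Lemma Bdd_pow B m F n : Bdd B m F -> Bdd B m (fun u => F u ^ n).
Proof. intros HF; induction n; simpl. apply Bdd_const. apply (Bdd_mult _ _ F (fun u => F u ^ n)); auto. Qed.
Lemma Lip_pow B m F n : Bdd B m F -> Lip B m F -> Lip B m (fun u => F u ^ n).
Proof. intros HB HF; induction n; simpl. apply Lip_const.
 apply (Lip_mult _ _ F (fun u => F u ^ n)); auto using Bdd_pow. Qed.

Ltac lipt := repeat first [ apply Lip_q1 | apply Lip_q2 | apply Lip_q3 | apply Lip_q4 | apply Lip_q5
 | apply Bdd_q1 | apply Bdd_q2 | apply Bdd_q3 | apply Bdd_q4 | apply Bdd_q5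
 | apply Lip_const | apply Bdd_const | apply Lip_plus | apply Bdd_plus | apply Lip_minus | apply Bdd_minus
 | apply Lip_opp | apply Bdd_opp | apply Lip_mult | apply Bdd_mult | apply Lip_pow | apply Bdd_pow
 | apply Lip_inv | apply Bdd_inv ].

Definition R1v d Q (f f1 g g1 h1 : R) := - d * f1 * g1 / g + d * Q^2 * f^3 / (4 * g^4) - h1 * f1.
Definition R2v d Q (f f1 g g1 h1 : R) := -(d-1) * g1^2 / g + (d+2)/g - Q^2 * f^2 / (2 * g^3) - h1 * g1.
Definition R3v d C (f f1 g g1 h1 : R) := C - h1^2 - d * h1 * g1 / g.

Lemma lowpow B m n : 0 < m -> exists c, 0 < c /\ forall u, Dom B m u -> c <= q3 u ^ n.
Proof. intros Hm; exists (m ^ n); split. apply pow_lt; lra.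
 intros u Hu; apply pow_incr; destruct Hu as (_&_&_&_&_&H); lra. Qed.

Lemma Rlip d Q C B m : 0 < m -> exists L Kb, 0 <= L /\ 0 <= Kb /\
  forall u v, Dom B m u -> Dom B m v ->
   Rabs (R1v d Q (q1 u) (q2 u) (q3 u) (q4 u) (q5 u) - R1v d Q (q1 v) (q2 v) (q3 v) (q4 v) (q5 v)) <= L * dst u v /\
   Rabs (R2v d Q (q1 u) (q2 u) (q3 u) (q4 u) (q5 u) - R2v d Q (q1 v) (q2 v) (q3 v) (q4 v) (q5 v)) <= L * dst u v /\
   Rabs (R3v d C (q1 u) (q2 u) (q3 u) (q4 u) (q5 u) - R3v d C (q1 v) (q2 v) (q3 v) (q4 v) (q5 v)) <= L * dst u v /\
   Rabs (R2v d Q (q1 u) (q2 u) (q3 u) (q4 u) (q5 u)) <= Kb /\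
   Rabs (R3v d C (q1 u) (q2 u) (q3 u) (q4 u) (q5 u)) <= Kb.
Proof. intros Hm.
 assert (low1 : exists c, 0 < c /\ forall u, Dom B m u -> c <= q3 u).
 { exists m; split; auto. intros u Hu; apply Hu. }
 assert (low4 : exists c, 0 < c /\ forall u, Dom B m u -> c <= 4 * q3 u ^ 4).
 { destruct (lowpow B m 4 Hm) as [c [Hc H]]; exists (4*c); split; [lra|]; intros u Hu; specialize (H u Hu); lra. }
 assert (low3 : exists c, 0 < c /\ forall u, Dom B m u -> c <= 2 * q3 u ^ 3).
 { destruct (lowpow B m 3 Hm) as [c [Hc H]]; exists (2*c); split; [lra|]; intros u Hu; specialize (H u Hu); lra. }
 assert (L1 : Lip B m (fun u => R1v d Q (q1 u) (q2 u) (q3 u) (q4 u) (q5 u))).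
 { unfold R1v, Rdiv. lipt; auto. }
 assert (L2 : Lip B m (fun u => R2v d Q (q1 u) (q2 u) (q3 u) (q4 u) (q5 u))).
 { unfold R2v, Rdiv. lipt; auto. }
 assert (L3 : Lip B m (fun u => R3v d C (q1 u) (q2 u) (q3 u) (q4 u) (q5 u))).
 { unfold R3v, Rdiv. lipt; auto. }
 assert (B2 : Bdd B m (fun u => R2v d Q (q1 u) (q2 u) (q3 u) (q4 u) (q5 u))).
 { unfold R2v, Rdiv. lipt; auto. }
 assert (B3 : Bdd B m (fun u => R3v d C (q1 u) (q2 u) (q3 u) (q4 u) (q5 u))).
 { unfold R3v, Rdiv. lipt; auto. }
 destruct L1 as [a1 [Ha1 H1]]; destruct L2 as [a2 [Ha2 H2]]; destruct L3 as [a3 [Ha3 H3]];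
 destruct B2 as [b2 Hb2]; destruct B3 as [b3 Hb3].
 exists (a1+a2+a3), (Rabs b2 + Rabs b3). split; [lra|]. split; [pose proof (Rabs_pos b2); pose proof (Rabs_pos b3); lra|].
 intros u v Hu Hv. pose proof (dist_ge0 u v).
 specialize (H1 u v Hu Hv); specialize (H2 u v Hu Hv); specialize (H3 u v Hu Hv);
 specialize (Hb2 u Hu); specialize (Hb3 u Hu).
 pose proof (Rle_abs b2); pose proof (Rle_abs b3); pose proof (Rabs_pos b2); pose proof (Rabs_pos b3).
 repeat split; nra. Qed.

Lemma abs0 z : Rabs z <= 0 -> z = 0.
Proof. intros H; pose proof (Rle_abs z); pose proof (Rle_abs (-z)); rewrite Rabs_Ropp in *; lra. Qed.

Lemma mvt_bound u u' a x Bd : a <= x -> is_deriv u u' ->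
  (forall t, a < t < x -> Rabs (u' t) <= Bd) -> Rabs (u x - u a) <= Bd * (x - a).
Proof. intros Hax Hd Hb. destruct (Req_dec a x) as [<-|Hne].
 - rewrite Rminus_diag, Rabs_R0. assert (0 <= Bd * 0) by lra. lra.
 - destruct (MVT_cor2 u u' a x) as [c [Hc Hc2]]; [lra| intros; apply Hd |].
   rewrite Hc, Rabs_mult, (Rabs_pos_eq (x - a)) by lra.
   apply Rmult_le_compat_r; [lra|]. apply Hb; lra. Qed.

Lemma deriv_minus u u' v v' : is_deriv u u' -> is_deriv v v' ->
  is_deriv (fun t => u t - v t) (fun t => u' t - v' t).
Proof. intros Hu Hv x. exact (derivable_pt_lim_minus u v x _ _ (Hu x) (Hv x)). Qed.
Lemma deriv_mult u u' v v' : is_deriv u u' -> is_deriv v v' ->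
  is_deriv (fun t => u t * v t) (fun t => u' t * v t + u t * v' t).
Proof. intros Hu Hv x. exact (derivable_pt_lim_mult u v x _ _ (Hu x) (Hv x)). Qed.

(* generic bound for the singular (f y)' = f R pattern *)
Lemma fy_bound (f f1 fb fb1 y y' yb yb' Ry Ryb : R -> R) a δ e c K M :
  is_deriv f f1 -> is_deriv fb fb1 -> is_deriv y y' -> is_deriv yb yb' ->
  0 <= a -> 0 <= e -> 0 < c -> 0 <= K -> 0 <= M ->
  (forall t, 0 < t -> f1 t * y t + f t * y' t = f t * Ry t) ->
  (forall t, 0 < t -> fb1 t * yb t + fb t * yb' t = fb t * Ryb t) ->
  f a = fb a -> y a = yb a ->
  (forall t, a <= t <= a + δ -> Rabs (f t - fb t) <= M * (t - a)) ->
  (forall t, a < t <= a + δ -> Rabs (Ry t) <= K /\ Rabs (Ry t - Ryb t) <= K * M) ->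
  (forall t, a <= t <= a + δ -> Rabs (fb t) <= K * (t - a + e) /\ Rabs (yb t) <= K * (t - a + e)) ->
  (forall t, a < t <= a + δ -> c * (t - a + e) <= f t) ->
  forall x, a < x <= a + δ -> Rabs (y x - yb x) <= (2*K + K^2) / c * M * (x - a).
Proof.
 intros Hf Hfb Hy Hyb Ha He Hc HK HM E Eb Fa Ya HF HR Hb Hlow x Hx.
 set (A := fun t => f t * y t - fb t * yb t).
 assert (HA : Rabs (A x - A a) <= ((K + K^2) * (x - a + e) * M) * (x - a)).
 { apply (mvt_bound A (fun t => (f1 t * y t + f t * y' t) - (fb1 t * yb t + fb t * yb' t))); [lra| |].
   - apply deriv_minus; apply deriv_mult; auto.
   - intros t Ht. rewrite E, Eb by lra.
     replace (f t * Ry t - fb t * Ryb t) with ((f t - fb t) * Ry t + fb t * (Ry t - Ryb t)) by ring.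
     eapply Rle_trans; [apply Rabs_triang|]. rewrite !Rabs_mult.
     destruct (HR t) as [HR1 HR2]; [lra|]. destruct (Hb t) as [Hb1 _]; [lra|].
     specialize (HF t ltac:(lra)).
     assert (Rabs (f t - fb t) * Rabs (Ry t) <= (M * (t - a)) * K) by (apply Rmult_le_compat; auto using Rabs_pos).
     assert (Rabs (fb t) * Rabs (Ry t - Ryb t) <= (K * (t - a + e)) * (K * M)) by (apply Rmult_le_compat; auto using Rabs_pos).
     assert (M * (t - a) * K <= K * (x - a + e) * M).
     { replace (K * (x - a + e) * M) with ((M * K) * (x - a + e)) by ring.
       replace (M * (t - a) * K) with ((M * K) * (t - a)) by ring.
       apply Rmult_le_compat_l; [nra|lra]. }
     assert (K * (t - a + e) * (K * M) <= K^2 * (x - a + e) * M).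
     { replace (K * (t - a + e) * (K * M)) with ((K*K*M) * (t - a + e)) by ring.
       replace (K^2 * (x - a + e) * M) with ((K*K*M) * (x - a + e)) by ring.
       apply Rmult_le_compat_l; [apply Rmult_le_pos; nra|lra]. }
     lra. }
 assert (HA0 : A a = 0) by (unfold A; rewrite Fa, Ya; ring).
 rewrite HA0, Rminus_0_r in HA.
 assert (Heq : f x * (y x - yb x) = A x + yb x * (fb x - f x)) by (unfold A; ring).
 destruct (Hb x) as [_ Hyx]; [lra|]. specialize (HF x ltac:(lra)). specialize (Hlow x Hx).
 assert (Hw : 0 < x - a + e) by lra.
 assert (H1 : Rabs (f x * (y x - yb x)) <= (2*K + K^2) * (x - a + e) * M * (x - a)).
 { rewrite Heq. eapply Rle_trans; [apply Rabs_triang|]. rewrite Rabs_mult.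
   rewrite <- Rabs_Ropp in HF. replace (- (f x - fb x)) with (fb x - f x) in HF by ring.
   assert (Rabs (yb x) * Rabs (fb x - f x) <= (K * (x - a + e)) * (M * (x - a)))
     by (apply Rmult_le_compat; auto using Rabs_pos).
   nra. }
 rewrite Rabs_mult, (Rabs_pos_eq (f x)) in H1 by nra.
 assert (H2 : c * (x - a + e) * Rabs (y x - yb x) <= (2*K + K^2) * (x - a + e) * M * (x - a)).
 { eapply Rle_trans; [|apply H1]. apply Rmult_le_compat_r; auto using Rabs_pos. }
 assert (H3 : c * Rabs (y x - yb x) <= (2*K + K^2) * M * (x - a)).
 { apply (Rmult_le_reg_r (x - a + e)); [lra|]. nra. }
 unfold Rdiv. replace ((2*K + K^2) * / c * M * (x - a)) with (((2*K + K^2) * M * (x - a)) / c) by (field; lra).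
 apply (Rmult_le_reg_l c); [lra|].
 replace (c * ((2 * K + K ^ 2) * M * (x - a) / c)) with ((2 * K + K ^ 2) * M * (x - a)) by (field; lra).
 lra. Qed.

Definition Sys d Q C (f f1 f2 g g1 g2 h1 h2 : R -> R) : Prop :=
 is_deriv f f1 /\ is_deriv f1 f2 /\ is_deriv g g1 /\ is_deriv g1 g2 /\ is_deriv h1 h2 /\
 forall s, 0 < s -> f2 s = R1v d Q (f s) (f1 s) (g s) (g1 s) (h1 s) /\
   f1 s * g1 s + f s * g2 s = f s * R2v d Q (f s) (f1 s) (g s) (g1 s) (h1 s) /\
   f1 s * h1 s + f s * h2 s = f s * R3v d C (f s) (f1 s) (g s) (g1 s) (h1 s).

Definition Dv (f f1 g g1 h1 fb fb1 gb gb1 hb1 : R -> R) x :=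
  Rabs (f x - fb x) + Rabs (f1 x - fb1 x) + Rabs (g x - gb x) + Rabs (g1 x - gb1 x) + Rabs (h1 x - hb1 x).

Lemma cont_d u u' : is_deriv u u' -> forall x, continuity_pt u x.
Proof. intros H x. apply derivable_continuous_pt. exists (u' x). apply H. Qed.

Lemma cont_absdiff u v x : continuity_pt u x -> continuity_pt v x -> continuity_pt (fun t => Rabs (u t - v t)) x.
Proof. intros Hu Hv. apply (continuity_pt_comp (fun t => u t - v t) Rabs).
 exact (continuity_pt_minus u v x Hu Hv). apply Rcontinuity_abs. Qed.
Lemma cont_plus' u v x : continuity_pt u x -> continuity_pt v x -> continuity_pt (fun t => u t + v t) x.
Proof. intros Hu Hv. exact (continuity_pt_plus u v x Hu Hv). Qed.

Lemma Dv_nonneg f f1 g g1 h1 fb fb1 gb gb1 hb1 x : 0 <= Dv f f1 g g1 h1 fb fb1 gb gb1 hb1 x.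
Proof. unfold Dv. pose proof (Rabs_pos (f x - fb x)); pose proof (Rabs_pos (f1 x - fb1 x));
 pose proof (Rabs_pos (g x - gb x)); pose proof (Rabs_pos (g1 x - gb1 x)); pose proof (Rabs_pos (h1 x - hb1 x)); lra. Qed.

Lemma Dv_zero f f1 g g1 h1 fb fb1 gb gb1 hb1 x : Dv f f1 g g1 h1 fb fb1 gb gb1 hb1 x = 0 ->
  f x = fb x /\ f1 x = fb1 x /\ g x = gb x /\ g1 x = gb1 x /\ h1 x = hb1 x.
Proof. unfold Dv. intros H. pose proof (Rabs_pos (f x - fb x)); pose proof (Rabs_pos (f1 x - fb1 x));
 pose proof (Rabs_pos (g x - gb x)); pose proof (Rabs_pos (g1 x - gb1 x)); pose proof (Rabs_pos (h1 x - hb1 x)).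
 repeat split; apply Rminus_diag_uniq, abs0; lra. Qed.

Lemma step d Q C f f1 f2 g g1 g2 h1 h2 fb fb1 fb2 gb gb1 gb2 hb1 hb2 a δ e c K :
 Sys d Q C f f1 f2 g g1 g2 h1 h2 -> Sys d Q C fb fb1 fb2 gb gb1 gb2 hb1 hb2 ->
 0 <= a -> 0 < δ -> 0 <= e -> 0 < c -> 0 <= K ->
 Dv f f1 g g1 h1 fb fb1 gb gb1 hb1 a = 0 ->
 (forall x, a < x <= a+δ -> c*(x-a+e) <= f x) ->
 (forall x, a <= x <= a+δ -> Rabs (fb x) <= K*(x-a+e) /\ Rabs (gb1 x) <= K*(x-a+e) /\ Rabs (hb1 x) <= K*(x-a+e)) ->
 (forall x, a < x <= a+δ ->
   Rabs (R1v d Q (f x) (f1 x) (g x) (g1 x) (h1 x) - R1v d Q (fb x) (fb1 x) (gb x) (gb1 x) (hb1 x))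
     <= K * Dv f f1 g g1 h1 fb fb1 gb gb1 hb1 x /\
   Rabs (R2v d Q (f x) (f1 x) (g x) (g1 x) (h1 x) - R2v d Q (fb x) (fb1 x) (gb x) (gb1 x) (hb1 x))
     <= K * Dv f f1 g g1 h1 fb fb1 gb gb1 hb1 x /\
   Rabs (R3v d C (f x) (f1 x) (g x) (g1 x) (h1 x) - R3v d C (fb x) (fb1 x) (gb x) (gb1 x) (hb1 x))
     <= K * Dv f f1 g g1 h1 fb fb1 gb gb1 hb1 x /\
   Rabs (R2v d Q (f x) (f1 x) (g x) (g1 x) (h1 x)) <= K /\
   Rabs (R3v d C (f x) (f1 x) (g x) (g1 x) (h1 x)) <= K) ->
 (2 + K + 2 * ((2*K+K^2)/c)) * δ <= 1/2 ->
 forall x, a <= x <= a+δ -> Dv f f1 g g1 h1 fb fb1 gb gb1 hb1 x = 0.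
Proof.
 intros S1 S2 Ha Hδ He Hc HK D0 Hlow Hbd HR Hsmall.
 destruct S1 as (df & df1 & dg & dg1 & dh1 & E).
 destruct S2 as (dfb & dfb1 & dgb & dgb1 & dhb1 & Eb).
 set (D := Dv f f1 g g1 h1 fb fb1 gb gb1 hb1) in *.
 assert (Dc : forall x, continuity_pt D x).
 { intros x. unfold D, Dv.
   repeat apply cont_plus'; apply cont_absdiff; eapply cont_d; eauto. }
 destruct (continuity_ab_maj D a (a+δ)) as [xm [HM Hxm]]; [lra| intros; apply Dc |].
 set (M := D xm) in *.
 assert (HM0 : 0 <= M) by (unfold M, D; apply Dv_nonneg).
 destruct (Dv_zero _ _ _ _ _ _ _ _ _ _ _ D0) as (Fa & F1a & Ga & G1a & H1a).
 assert (HDle : forall t, a <= t <= a + δ -> D t <= M) by (intros; apply HM; lra).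
 assert (Dparts : forall t, a <= t <= a + δ ->
   Rabs (f t - fb t) <= M /\ Rabs (f1 t - fb1 t) <= M /\ Rabs (g t - gb t) <= M /\
   Rabs (g1 t - gb1 t) <= M /\ Rabs (h1 t - hb1 t) <= M).
 { intros t Ht. specialize (HDle t Ht). unfold D, Dv in HDle.
   pose proof (Rabs_pos (f t - fb t)); pose proof (Rabs_pos (f1 t - fb1 t));
   pose proof (Rabs_pos (g t - gb t)); pose proof (Rabs_pos (g1 t - gb1 t)); pose proof (Rabs_pos (h1 t - hb1 t)).
   lra. }
 assert (CF : forall t, a <= t <= a + δ -> Rabs (f t - fb t) <= M * (t - a)).
 { intros t Ht. assert (Rabs ((f t - fb t) - (f a - fb a)) <= M * (t - a)).
   { apply (mvt_bound (fun t => f t - fb t) (fun t => f1 t - fb1 t)); [lra| apply deriv_minus; auto|].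
     intros s Hs; apply Dparts; lra. }
   rewrite Fa, Rminus_diag, Rminus_0_r in H. exact H. }
 assert (CG : forall t, a <= t <= a + δ -> Rabs (g t - gb t) <= M * (t - a)).
 { intros t Ht. assert (Rabs ((g t - gb t) - (g a - gb a)) <= M * (t - a)).
   { apply (mvt_bound (fun t => g t - gb t) (fun t => g1 t - gb1 t)); [lra| apply deriv_minus; auto|].
     intros s Hs; apply Dparts; lra. }
   rewrite Ga, Rminus_diag, Rminus_0_r in H. exact H. }
 assert (CF1 : forall t, a <= t <= a + δ -> Rabs (f1 t - fb1 t) <= (K * M) * (t - a)).
 { intros t Ht. assert (Rabs ((f1 t - fb1 t) - (f1 a - fb1 a)) <= (K * M) * (t - a)).
   { apply (mvt_bound (fun t => f1 t - fb1 t) (fun t => f2 t - fb2 t)); [lra| apply deriv_minus; auto|].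
     intros s Hs. destruct (E s ltac:(lra)) as [-> _]. destruct (Eb s ltac:(lra)) as [-> _].
     destruct (HR s ltac:(lra)) as [HR1 _]. eapply Rle_trans; [apply HR1|].
     apply Rmult_le_compat_l; auto. apply HDle; lra. }
   rewrite F1a, Rminus_diag, Rminus_0_r in H. exact H. }
 assert (CG1 : forall t, a < t <= a + δ -> Rabs (g1 t - gb1 t) <= (2*K + K^2) / c * M * (t - a)).
 { apply (fy_bound f f1 fb fb1 g1 g2 gb1 gb2
     (fun s => R2v d Q (f s) (f1 s) (g s) (g1 s) (h1 s)) (fun s => R2v d Q (fb s) (fb1 s) (gb s) (gb1 s) (hb1 s))
     a δ e c K M); auto.
   - intros s Hs; apply E; auto.
   - intros s Hs; apply Eb; auto.
   - intros s Hs. destruct (HR s Hs) as (_ & HR2 & _ & HB2 & _). split; auto.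
     eapply Rle_trans; [apply HR2|]. apply Rmult_le_compat_l; auto. apply HDle; lra.
   - intros s Hs. destruct (Hbd s Hs) as (? & ? & ?); auto. }
 assert (CH1 : forall t, a < t <= a + δ -> Rabs (h1 t - hb1 t) <= (2*K + K^2) / c * M * (t - a)).
 { apply (fy_bound f f1 fb fb1 h1 h2 hb1 hb2
     (fun s => R3v d C (f s) (f1 s) (g s) (g1 s) (h1 s)) (fun s => R3v d C (fb s) (fb1 s) (gb s) (gb1 s) (hb1 s))
     a δ e c K M); auto.
   - intros s Hs; apply E; auto.
   - intros s Hs; apply Eb; auto.
   - intros s Hs. destruct (HR s Hs) as (_ & _ & HR3 & _ & HB3). split; auto.
     eapply Rle_trans; [apply HR3|]. apply Rmult_le_compat_l; auto. apply HDle; lra.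
   - intros s Hs. destruct (Hbd s Hs) as (? & ? & ?); auto. }
 set (K' := 2 + K + 2 * ((2*K+K^2)/c)).
 assert (HK'0 : 0 <= (2*K+K^2)/c) by (apply Rmult_le_pos; [nra| apply Rlt_le, Rinv_0_lt_compat; lra]).
 assert (Call : forall t, a <= t <= a + δ -> D t <= K' * M * δ).
 { intros t Ht. destruct (Req_dec t a) as [->|Hne].
   - rewrite D0. unfold K'. apply Rmult_le_pos; [|lra]. apply Rmult_le_pos; lra.
   - specialize (CF t Ht); specialize (CG t Ht); specialize (CF1 t Ht).
     specialize (CG1 t ltac:(lra)); specialize (CH1 t ltac:(lra)).
     assert (D t <= K' * M * (t - a)).
     { unfold D, Dv, K'. set (P := (2*K+K^2)/c) in *. nra. }
     assert (K' * M * (t - a) <= K' * M * δ).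
     { apply Rmult_le_compat_l; [unfold K'; apply Rmult_le_pos; lra| lra]. }
     lra. }
 assert (M <= 0).
 { assert (M <= K' * M * δ) by (apply Call; lra).
   assert (K' * M * δ <= M * / 2).
   { replace (K' * M * δ) with (M * (K' * δ)) by ring. apply Rmult_le_compat_l; auto. unfold K'; lra. }
   lra. }
 intros x Hx. pose proof (HDle x Hx). pose proof (Dv_nonneg f f1 g g1 h1 fb fb1 gb gb1 hb1 x). fold D in H1. lra.
Qed.

Lemma cbound u : (forall x, continuity_pt u x) -> forall a b, a <= b ->
  exists B, 0 <= B /\ forall x, a <= x <= b -> Rabs (u x) <= B.
Proof. intros Hc a b Hab.
 destruct (continuity_ab_maj (fun x => Rabs (u x)) a b Hab) as [xm [H1 H2]].
 { intros c _. apply (continuity_pt_comp u Rabs); auto. apply Rcontinuity_abs. }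
 exists (Rabs (u xm)); split; auto using Rabs_pos. Qed.

Lemma cmin u a b : (forall x, continuity_pt u x) -> a <= b -> (forall x, a <= x <= b -> 0 < u x) ->
  exists m, 0 < m /\ forall x, a <= x <= b -> m <= u x.
Proof. intros Hc Hab Hp.
 destruct (continuity_ab_min u a b Hab) as [xm [H1 H2]]; [intros; auto|].
 exists (u xm); split; auto. Qed.

Lemma lin_up u l : derivable_pt_lim u 0 l -> u 0 = 0 ->
  exists δ, 0 < δ /\ forall x, 0 < x < δ -> Rabs (u x) <= (Rabs l + 1) * x.
Proof. intros Hd H0. destruct (Hd 1 Rlt_0_1) as [del Hdel].
 exists del; split; [apply cond_pos|]. intros x Hx.
 specialize (Hdel x ltac:(lra) ltac:(rewrite Rabs_pos_eq; lra)).
 rewrite Rplus_0_l, H0, Rminus_0_r in Hdel.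
 set (r := u x / x) in *.
 assert (Hux : u x = x * r) by (unfold r; field; lra).
 rewrite Hux, Rabs_mult, (Rabs_pos_eq x) by lra.
 assert (Rabs r <= Rabs l + 1).
 { replace r with ((r - l) + l) by ring. eapply Rle_trans; [apply Rabs_triang|]. lra. }
 nra. Qed.

Lemma lin_low u : derivable_pt_lim u 0 1 -> u 0 = 0 ->
  exists δ, 0 < δ /\ forall x, 0 < x < δ -> / 2 * x <= u x.
Proof. intros Hd H0. destruct (Hd (/2) ltac:(lra)) as [del Hdel].
 exists del; split; [apply cond_pos|]. intros x Hx.
 specialize (Hdel x ltac:(lra) ltac:(rewrite Rabs_pos_eq; lra)).
 rewrite Rplus_0_l, H0, Rminus_0_r in Hdel.
 set (r := u x / x) in *.
 assert (Hux : u x = x * r) by (unfold r; field; lra).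
 rewrite Hux. apply Rabs_def2 in Hdel. nra. Qed.

Lemma small_delta K' δ : 0 <= K' -> 0 < δ -> δ <= / (2 * K' + 1) -> K' * δ <= 1/2.
Proof. intros HK Hd Hle.
 assert (K' * δ <= K' * / (2 * K' + 1)) by (apply Rmult_le_compat_l; auto).
 assert (K' * / (2 * K' + 1) <= 1/2).
 { apply (Rmult_le_reg_r (2 * K' + 1)); [lra|].
   rewrite Rmult_assoc, Rinv_l by lra. lra. }
 lra. Qed.

Lemma uniq d Q C f f1 f2 g g1 g2 h1 h2 fb fb1 fb2 gb gb1 gb2 hb1 hb2 :
 Sys d Q C f f1 f2 g g1 g2 h1 h2 -> Sys d Q C fb fb1 fb2 gb gb1 gb2 hb1 hb2 ->
 f 0 = 0 -> fb 0 = 0 -> f1 0 = 1 -> fb1 0 = 1 -> g1 0 = 0 -> gb1 0 = 0 -> h1 0 = 0 -> hb1 0 = 0 ->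
 (forall s, 0 < s -> 0 < f s) -> (forall s, 0 <= s -> 0 < g s) -> (forall s, 0 <= s -> 0 < gb s) ->
 g 0 = gb 0 ->
 forall S, 0 <= S -> forall x, 0 <= x <= S -> Dv f f1 g g1 h1 fb fb1 gb gb1 hb1 x = 0.
Proof.
 intros S1 S2 f0 fb0 f10 fb10 g10 gb10 h10 hb10 fpos gpos gbpos g0 S HS.
 pose proof S1 as (df & df1 & dg & dg1 & dh1 & _).
 pose proof S2 as (dfb & dfb1 & dgb & dgb1 & dhb1 & _).
 set (T := S + 1).
 destruct (cbound f (cont_d _ _ df) 0 T ltac:(unfold T; lra)) as [B1 [HB1 Hb1]].
 destruct (cbound f1 (cont_d _ _ df1) 0 T ltac:(unfold T; lra)) as [B2 [HB2 Hb2]].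
 destruct (cbound g (cont_d _ _ dg) 0 T ltac:(unfold T; lra)) as [B3 [HB3 Hb3]].
 destruct (cbound g1 (cont_d _ _ dg1) 0 T ltac:(unfold T; lra)) as [B4 [HB4 Hb4]].
 destruct (cbound h1 (cont_d _ _ dh1) 0 T ltac:(unfold T; lra)) as [B5 [HB5 Hb5]].
 destruct (cbound fb (cont_d _ _ dfb) 0 T ltac:(unfold T; lra)) as [B6 [HB6 Hb6]].
 destruct (cbound fb1 (cont_d _ _ dfb1) 0 T ltac:(unfold T; lra)) as [B7 [HB7 Hb7]].
 destruct (cbound gb (cont_d _ _ dgb) 0 T ltac:(unfold T; lra)) as [B8 [HB8 Hb8]].
 destruct (cbound gb1 (cont_d _ _ dgb1) 0 T ltac:(unfold T; lra)) as [B9 [HB9 Hb9]].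
 destruct (cbound hb1 (cont_d _ _ dhb1) 0 T ltac:(unfold T; lra)) as [B10 [HB10 Hb10]].
 set (B := B1+B2+B3+B4+B5+B6+B7+B8+B9+B10).
 assert (HB : 0 <= B) by (unfold B; lra).
 destruct (cmin g 0 T (cont_d _ _ dg) ltac:(unfold T; lra) ltac:(intros; apply gpos; lra)) as [mg [Hmg Hmg2]].
 destruct (cmin gb 0 T (cont_d _ _ dgb) ltac:(unfold T; lra) ltac:(intros; apply gbpos; lra)) as [mgb [Hmgb Hmgb2]].
 set (m := Rmin mg mgb).
 assert (Hm : 0 < m) by (unfold m; apply Rmin_pos; auto).
 destruct (Rlip d Q C B m Hm) as (L & Kb & HL & HKb & HR).
 assert (DomU : forall x, 0 <= x <= T -> Dom B m (f x, f1 x, g x, g1 x, h1 x)).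
 { intros x Hx. unfold Dom, q1, q2, q3, q4, q5; simpl.
   specialize (Hb1 x Hx); specialize (Hb2 x Hx); specialize (Hb3 x Hx); specialize (Hb4 x Hx); specialize (Hb5 x Hx).
   specialize (Hmg2 x Hx). pose proof (Rmin_l mg mgb). fold m in H.
   unfold B; repeat split; lra. }
 assert (DomV : forall x, 0 <= x <= T -> Dom B m (fb x, fb1 x, gb x, gb1 x, hb1 x)).
 { intros x Hx. unfold Dom, q1, q2, q3, q4, q5; simpl.
   specialize (Hb6 x Hx); specialize (Hb7 x Hx); specialize (Hb8 x Hx); specialize (Hb9 x Hx); specialize (Hb10 x Hx).
   specialize (Hmgb2 x Hx). pose proof (Rmin_r mg mgb). fold m in H.
   unfold B; repeat split; lra. }
 assert (HRgen : forall K, L <= K -> Kb <= K -> forall x, 0 <= x <= T ->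
   Rabs (R1v d Q (f x) (f1 x) (g x) (g1 x) (h1 x) - R1v d Q (fb x) (fb1 x) (gb x) (gb1 x) (hb1 x))
     <= K * Dv f f1 g g1 h1 fb fb1 gb gb1 hb1 x /\
   Rabs (R2v d Q (f x) (f1 x) (g x) (g1 x) (h1 x) - R2v d Q (fb x) (fb1 x) (gb x) (gb1 x) (hb1 x))
     <= K * Dv f f1 g g1 h1 fb fb1 gb gb1 hb1 x /\
   Rabs (R3v d C (f x) (f1 x) (g x) (g1 x) (h1 x) - R3v d C (fb x) (fb1 x) (gb x) (gb1 x) (hb1 x))
     <= K * Dv f f1 g g1 h1 fb fb1 gb gb1 hb1 x /\
   Rabs (R2v d Q (f x) (f1 x) (g x) (g1 x) (h1 x)) <= K /\
   Rabs (R3v d C (f x) (f1 x) (g x) (g1 x) (h1 x)) <= K).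
 { intros K HLK HKbK x Hx.
   destruct (HR _ _ (DomU x Hx) (DomV x Hx)) as (r1 & r2 & r3 & r4 & r5).
   unfold dst in *; unfold q1, q2, q3, q4, q5 in *; simpl in *.
   pose proof (Dv_nonneg f f1 g g1 h1 fb fb1 gb gb1 hb1 x) as HD. unfold Dv in *.
   assert (L * (Rabs (f x - fb x) + Rabs (f1 x - fb1 x) + Rabs (g x - gb x) + Rabs (g1 x - gb1 x) + Rabs (h1 x - hb1 x))
     <= K * (Rabs (f x - fb x) + Rabs (f1 x - fb1 x) + Rabs (g x - gb x) + Rabs (g1 x - gb1 x) + Rabs (h1 x - hb1 x)))
     by (apply Rmult_le_compat_r; lra).
   repeat split; lra. }
 (* singular start *)
 destruct (lin_low f ltac:(rewrite <- f10; apply df) f0) as [δf [Hδf Hf]].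
 destruct (lin_up fb (fb1 0) (dfb 0) fb0) as [δa [Hδa Ha]].
 destruct (lin_up gb1 (gb2 0) (dgb1 0) gb10) as [δb [Hδb Hbb]].
 destruct (lin_up hb1 (hb2 0) (dhb1 0) hb10) as [δc [Hδc Hc]].
 set (K1 := L + Kb + (Rabs (fb1 0) + 1) + (Rabs (gb2 0) + 1) + (Rabs (hb2 0) + 1)).
 pose proof (Rabs_pos (fb1 0)); pose proof (Rabs_pos (gb2 0)); pose proof (Rabs_pos (hb2 0)).
 assert (HK1 : 0 <= K1) by (unfold K1; lra).
 set (K1' := 2 + K1 + 2 * ((2*K1+K1^2)/(/2))).
 assert (HK1' : 0 <= K1').
 { unfold K1'. assert (0 <= (2*K1+K1^2)/(/2)) by (unfold Rdiv; rewrite Rinv_inv; nra). lra. }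
 set (δ0 := Rmin (Rmin δf δa) (Rmin δb δc)).
 assert (Hδ0 : 0 < δ0) by (unfold δ0; repeat apply Rmin_pos; auto).
 assert (Hδ0s : δ0 <= δf /\ δ0 <= δa /\ δ0 <= δb /\ δ0 <= δc).
 { unfold δ0. pose proof (Rmin_l (Rmin δf δa) (Rmin δb δc)); pose proof (Rmin_r (Rmin δf δa) (Rmin δb δc));
   pose proof (Rmin_l δf δa); pose proof (Rmin_r δf δa); pose proof (Rmin_l δb δc); pose proof (Rmin_r δb δc). lra. }
 set (δ1 := Rmin (δ0/2) (Rmin 1 (/(2*K1'+1)))).
 assert (Hδ1 : 0 < δ1) by (unfold δ1; repeat apply Rmin_pos; try lra; apply Rinv_0_lt_compat; lra).
 assert (Hδ1s : δ1 <= δ0/2 /\ δ1 <= 1 /\ δ1 <= /(2*K1'+1)).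
 { unfold δ1. pose proof (Rmin_l (δ0/2) (Rmin 1 (/(2*K1'+1)))); pose proof (Rmin_r (δ0/2) (Rmin 1 (/(2*K1'+1))));
   pose proof (Rmin_l 1 (/(2*K1'+1))); pose proof (Rmin_r 1 (/(2*K1'+1))). lra. }
 assert (P0 : forall x, 0 <= x <= 0 + δ1 -> Dv f f1 g g1 h1 fb fb1 gb gb1 hb1 x = 0).
 { apply (step d Q C f f1 f2 g g1 g2 h1 h2 fb fb1 fb2 gb gb1 gb2 hb1 hb2 0 δ1 0 (/2) K1); auto; try lra.
   - unfold Dv. rewrite f0, fb0, f10, fb10, g0, g10, gb10, h10, hb10, !Rminus_diag, Rabs_R0. ring.
   - intros x Hx. replace (x - 0 + 0) with x by ring. apply Hf; lra.
   - intros x Hx. replace (x - 0 + 0) with x by ring.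
     destruct (Req_dec x 0) as [->|Hne].
     + rewrite fb0, gb10, hb10, Rabs_R0. lra.
     + specialize (Ha x ltac:(lra)); specialize (Hbb x ltac:(lra)); specialize (Hc x ltac:(lra)).
       repeat split.
       * eapply Rle_trans; [apply Ha|]. apply Rmult_le_compat_r; unfold K1; lra.
       * eapply Rle_trans; [apply Hbb|]. apply Rmult_le_compat_r; unfold K1; lra.
       * eapply Rle_trans; [apply Hc|]. apply Rmult_le_compat_r; unfold K1; lra.
   - intros x Hx. apply HRgen; unfold K1, T in *; lra.
   - apply small_delta; auto; try lra. unfold K1' in Hδ1s; lra. }
 (* regular continuation *)
 destruct (cmin f δ1 T (cont_d _ _ df) ltac:(unfold T; lra) ltac:(intros; apply fpos; lra)) as [mf [Hmf Hmf2]].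
 set (K2 := L + Kb + B).
 assert (HK2 : 0 <= K2) by (unfold K2; lra).
 set (c2 := mf / 2).
 assert (Hc2 : 0 < c2) by (unfold c2; lra).
 set (K2' := 2 + K2 + 2 * ((2*K2+K2^2)/c2)).
 assert (HK2' : 0 <= K2').
 { unfold K2'. assert (0 <= (2*K2+K2^2)/c2) by (apply Rmult_le_pos; [nra| apply Rlt_le, Rinv_0_lt_compat; lra]). lra. }
 set (δ2 := Rmin 1 (/(2*K2'+1))).
 assert (Hδ2 : 0 < δ2) by (unfold δ2; repeat apply Rmin_pos; try lra; apply Rinv_0_lt_compat; lra).
 assert (Hδ2s : δ2 <= 1 /\ δ2 <= /(2*K2'+1)).
 { unfold δ2. pose proof (Rmin_l 1 (/(2*K2'+1))); pose proof (Rmin_r 1 (/(2*K2'+1))). lra. }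
 assert (stepR : forall a, δ1 <= a <= S -> Dv f f1 g g1 h1 fb fb1 gb gb1 hb1 a = 0 ->
    forall x, a <= x <= a + δ2 -> Dv f f1 g g1 h1 fb fb1 gb gb1 hb1 x = 0).
 { intros a Ha0 Da.
   apply (step d Q C f f1 f2 g g1 g2 h1 h2 fb fb1 fb2 gb gb1 gb2 hb1 hb2 a δ2 1 c2 K2); auto; try lra.
   - intros x Hx. specialize (Hmf2 x ltac:(unfold T; lra)). unfold c2. assert (x - a + 1 <= 2) by lra. nra.
   - intros x Hx. assert (Hx' : 0 <= x <= T) by (unfold T; lra).
     specialize (Hb6 x Hx'); specialize (Hb9 x Hx'); specialize (Hb10 x Hx').
     assert (K2 <= K2 * (x - a + 1)) by nra.
     unfold K2, B in *. repeat split; lra.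
   - intros x Hx. apply HRgen; unfold K2, T in *; lra.
   - apply small_delta; auto; try lra. unfold K2' in Hδ2s; lra. }
 assert (Pn : forall n : nat, forall x, 0 <= x <= δ1 + INR n * δ2 -> x <= S ->
    Dv f f1 g g1 h1 fb fb1 gb gb1 hb1 x = 0).
 { induction n as [|n IH]; intros x Hx HxS.
   - apply P0. simpl in Hx. lra.
   - rewrite S_INR in Hx.
     destruct (Rle_dec x (δ1 + INR n * δ2)) as [Hle|Hgt].
     + apply IH; lra.
     + set (a := δ1 + INR n * δ2) in *.
       pose proof (pos_INR n).
       assert (Ha0 : δ1 <= a <= S) by (unfold a in *; split; nra).
       apply (stepR a Ha0); [apply IH; unfold a in *; lra | unfold a in *; lra]. }
 destruct (archimed_cor1 (δ2 / (S + 1))) as [N [HN1 HN2]].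
 { apply Rdiv_lt_0_compat; lra. }
 intros x Hx. apply (Pn N); try lra.
 assert (HNpos : 0 < INR N) by (apply lt_0_INR; auto).
 assert (S + 1 <= INR N * δ2).
 { assert (/ INR N * (S + 1) <= δ2 / (S + 1) * (S + 1)) by (apply Rmult_le_compat_r; lra).
   replace (δ2 / (S + 1) * (S + 1)) with δ2 in H2 by (field; lra).
   assert (INR N * (/ INR N * (S + 1)) <= INR N * δ2) by (apply Rmult_le_compat_l; lra).
   rewrite <- Rmult_assoc, Rinv_r, Rmult_1_l in H3 by lra. lra. }
 lra.
Qed.

Lemma even_deriv0 u u' : is_deriv u u' -> (forall x, u (- x) = u x) -> u' 0 = 0.
Proof. intros Hd He.
 assert (Hop : derivable_pt_lim (fun x => - x) 0 (-1)).
 { apply (derivable_pt_lim_opp id 0 1). apply derivable_pt_lim_id. }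
 pose proof (derivable_pt_lim_comp (fun x => - x) u 0 (-1) (u' (- 0)) Hop (Hd _)) as Hc.
 assert (Heq : comp u (fun x => - x) = u) by (apply functional_extensionality; intro x; unfold comp; apply He).
 rewrite Heq in Hc. pose proof (uniqueness_limite u 0 _ _ Hc (Hd 0)). rewrite Ropp_0 in H. lra. Qed.

Lemma odd0 u : (forall x, u (- x) = - u x) -> u 0 = 0.
Proof. intros H. specialize (H 0). rewrite Ropp_0 in H. lra. Qed.

Lemma soliton_sys d q C f g h : steady_soliton d q C f g h ->
  exists f1 f2 g1 g2 h1 h2, is_deriv h h1 /\ Sys d (q * (d + 2)) C f f1 f2 g g1 g2 h1 h2 /\
   f 0 = 0 /\ f1 0 = 1 /\ g1 0 = 0 /\ h1 0 = 0 /\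
   (forall s, 0 < s -> 0 < f s) /\ (forall s, 0 <= s -> 0 < g s).
Proof.
 intros (f1 & f2 & g1 & g2 & h1 & h2 & _ & _ & _ & df & df1 & dg & dg1 & dh & dh1 & fo & ge & he & f10 & fp & gp & Rc & Sc).
 exists f1, f2, g1, g2, h1, h2. split; auto. split.
 - split; [|split; [|split; [|split; [|split]]]]; auto.
   intros s Hs. specialize (fp s Hs); specialize (gp s ltac:(lra)).
   destruct (Rc s Hs) as (Hss & Hvv & Hhh). specialize (Sc s Hs).
   unfold scal in Sc. rewrite Hss, Hvv, Hhh in Sc.
   unfold Rc_vv in Hvv. unfold Rc_hh in Hhh.
   split; [|split].
   + assert (H' : - f2 s / f s = h1 s * f1 s / f s + d * f1 s * g1 s / (f s * g s)
        - d * (q * (d + 2)) ^ 2 * f s ^ 2 / (4 * g s ^ 4)) by lra.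
     assert (H0 : f2 s = - (- f2 s / f s) * f s) by (field; lra).
     rewrite H0, H'. unfold R1v. field. split; lra.
   + assert (H' : - g2 s / g s = h1 s * g1 s / g s + (d - 1) * (g1 s / g s) ^ 2 + f1 s * g1 s / (f s * g s)
        - (d + 2) / g s ^ 2 + (q * (d + 2)) ^ 2 * f s ^ 2 / (2 * g s ^ 4)) by lra.
     assert (H0 : g2 s = - (- g2 s / g s) * g s) by (field; lra).
     rewrite H0, H'. unfold R2v. field. split; lra.
   + assert (H' : h2 s = C - h1 s ^ 2 - h1 s * f1 s / f s - d * (h1 s * g1 s / g s)) by lra.
     rewrite H'. unfold R3v. field. split; lra.
 - repeat split; auto.
   + apply odd0; auto.
   + apply (even_deriv0 g g1); auto.
   + apply (even_deriv0 h h1); auto.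
Qed.

Theorem theorem4p2 (m : nat) (q C : R) (f g h fb gb hb : R -> R) :
  (1 <= m)%nat ->
  steady_soliton (INR (2 * m)) q C f g h ->
  steady_soliton (INR (2 * m)) q C fb gb hb ->
  g 0 = gb 0 ->
  0 < C ->
  forall s, 0 <= s ->
    f s = fb s /\ g s = gb s /\
    (forall a b, derivable_pt_lim h s a -> derivable_pt_lim hb s b -> a = b).
Proof.
 intros _ H1 H2 Hg0 _ s Hs.
 destruct (soliton_sys _ _ _ _ _ _ H1) as (f1 & f2 & g1 & g2 & h1 & h2 & dh & S1 & f0 & f10 & g10 & h10 & fp & gp).
 destruct (soliton_sys _ _ _ _ _ _ H2) as (fb1 & fb2 & gb1 & gb2 & hb1 & hb2 & dhb & S2 & fb0 & fb10 & gb10 & hb10 & fbp & gbp).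
 pose proof (uniq _ _ _ _ _ _ _ _ _ _ _ _ _ _ _ _ _ _ _ S1 S2 f0 fb0 f10 fb10 g10 gb10 h10 hb10 fp gp gbp Hg0 s Hs s
   ltac:(lra)) as HD.
 destruct (Dv_zero _ _ _ _ _ _ _ _ _ _ _ HD) as (Ef & _ & Eg & _ & Eh).
 split; [auto | split; [auto|]].
 intros a b Ha Hb.
 rewrite (uniqueness_limite h s a (h1 s) Ha (dh s)), (uniqueness_limite hb s b (hb1 s) Hb (dhb s)). auto.
Qed.
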